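(* Let $n\le d$, let $\{u_i\}_{i=1}^n$ be an orthonormal family in $\mathbb{C}^d$, let $\{e_i\}$ be the standard basis of $\mathbb{C}^n$, and let $K=\sum_{i=1}^n|e_i\rangle\langle u_i\otimes\overline{u_i}|$. If $\rho$ is a separable bipartite PSD matrix on $\mathbb{C}^d\otimes\mathbb{C}^d$ whose range is contained in the symmetric subspace $\mathbb{C}^d\vee\mathbb{C}^d$, then $Z^\Gamma_K(\rho)=K\rho^\Gamma K^*\in\operatorname{R}_1[\mathsf{DNN}_n]$.
   Context: $\rho^\Gamma$ is the partial transpose on the second factor (standard basis), $\overline{u}$ is entrywise complex conjugation. A bipartite PSD $\rho$ is separable if it is a finite sum $\sum_k|v_k\rangle\langle v_k|\otimes|w_k\rangle\langle w_k|$. The symmetric subspace $\mathbb{C}^d\vee\mathbb{C}^d$ is the $+1$ eigenspace of the flip operator $F=\sum_{i,j}|ij\rangle\langle ji|$. $\mathsf{DNN}_n$ is the cone of $n\times n$ PSD matrices with entrywise nonnegative entries, and $\operatorname{R}_1[\mathsf{DNN}_n]$ is the convex cone generated by the rank-1 matrices in $\mathsf{DNN}_n$. *)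

(* Defs.v *)
(* Complex numbers: an arbitrary numClosedFieldType C
   (e.g. algC, or complex R for a real closed field R). *)
From HB Require Import structures.
From mathcomp Require Import all_boot all_order all_algebra.
Set Implicit Arguments. Unset Strict Implicit. Unset Printing Implicit Defensive.
Import Order.TTheory GRing.Theory Num.Theory.
Local Open Scope ring_scope.

Section Defs.
Variable C : numClosedFieldType.

(* decoding of a tensor index k of C^d (x) C^d into a pair (i,j);
   inverse of mxvec_index *)
Definition tidx (d : nat) (k : 'I_(d * d)) : 'I_d * 'I_d :=
  enum_val (cast_ord (esym (mxvec_cast d d)) k).

Definition conjmx (m n : nat) (A : 'M[C]_(m, n)) : 'M[C]_(m, n) :=
  map_mx (fun z => z^*) A.
Definition hadj (m n : nat) (A : 'M[C]_(m, n)) : 'M[C]_(n, m) := (conjmx A)^T.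

Definition kronv (d : nat) (u w : 'cV[C]_d) : 'cV[C]_(d * d) :=
  \col_k (u (tidx k).1 0 * w (tidx k).2 0).

(* partial transpose on the second factor *)
Definition ptrans (d : nat) (rho : 'M[C]_(d * d)) : 'M[C]_(d * d) :=
  \matrix_(k, l) rho (mxvec_index (tidx k).1 (tidx l).2)
                     (mxvec_index (tidx l).1 (tidx k).2).

Definition flipmx (d : nat) : 'M[C]_(d * d) :=
  \matrix_(k, l) (((tidx k).1 == (tidx l).2) && ((tidx k).2 == (tidx l).1))%:R.

Definition psdmx (n : nat) (A : 'M[C]_n) : Prop :=
  hadj A = A /\ forall x : 'cV[C]_n, 0 <= (hadj x *m A *m x) 0 0.

Definition separable (d : nat) (rho : 'M[C]_(d * d)) : Prop :=
  exists (m : nat) (v w : 'I_m -> 'cV[C]_d),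
    rho = \sum_(k < m) (kronv (v k) (w k) *m hadj (kronv (v k) (w k))).

(* range of rho contained in the symmetric subspace (+1 eigenspace of F) *)
Definition range_in_sym (d : nat) (rho : 'M[C]_(d * d)) : Prop :=
  forall x : 'cV[C]_(d * d), flipmx d *m (rho *m x) = rho *m x.

Definition DNN (n : nat) (A : 'M[C]_n) : Prop :=
  psdmx A /\ forall i j, 0 <= A i j.

Definition R1DNN (n : nat) (A : 'M[C]_n) : Prop :=
  exists (m : nat) (c : 'I_m -> C) (X : 'I_m -> 'M[C]_n),
    (forall k, 0 <= c k) /\ (forall k, DNN (X k) /\ \rank (X k) = 1%N) /\
    A = \sum_(k < m) c k *: X k.

Definition orthonormal_fam (n d : nat) (u : 'I_n -> 'cV[C]_d) : Prop :=
  forall i j, (hadj (u i) *m u j) 0 0 = (i == j)%:R.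

Definition ebasis (n : nat) (i : 'I_n) : 'cV[C]_n := \col_j (j == i)%:R.

Definition Kmap (n d : nat) (u : 'I_n -> 'cV[C]_d) : 'M[C]_(n, d * d) :=
  \sum_(i < n) (ebasis i *m hadj (kronv (u i) (conjmx (u i)))).

End Defs.

(* Main.v *)
Require Import Defs.
From HB Require Import structures.
From mathcomp Require Import all_boot all_order all_algebra.
From mathcomp Require Import ring.
Set Implicit Arguments. Unset Strict Implicit. Unset Printing Implicit Defensive.
Import Order.TTheory GRing.Theory Num.Theory.
Local Open Scope ring_scope.

Section Helpers.
Variable C : numClosedFieldType.

Lemma tidxK d (i j : 'I_d) : tidx (mxvec_index i j) = (i, j).
Proof. by rewrite /tidx /mxvec_index cast_ordK enum_rankK. Qed.

Lemma sum_tidx d (F : 'I_(d * d) -> C) :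
  \sum_(k < d * d) F k = \sum_(i < d) \sum_(j < d) F (mxvec_index i j).
Proof.
rewrite pair_big /= (reindex (fun p : 'I_d * 'I_d => mxvec_index p.1 p.2)) //.
exists (fun k => tidx k) => [[i j] _ | k _] /=; first by rewrite tidxK.
by case/mxvec_indexP: k => i j; rewrite tidxK.
Qed.

Lemma hadjE m n (A : 'M[C]_(m, n)) i j : hadj A i j = (A j i)^*.
Proof. by rewrite /hadj /Defs.conjmx !mxE. Qed.

Lemma hadjM m n p (A : 'M[C]_(m, n)) (B : 'M[C]_(n, p)) :
  hadj (A *m B) = hadj B *m hadj A.
Proof.
apply/matrixP => i j; rewrite /hadj /Defs.conjmx !mxE rmorph_sum.
by apply: eq_bigr => k _; rewrite !mxE rmorphM mulrC.
Qed.

Lemma hadjK m n (A : 'M[C]_(m, n)) : hadj (hadj A) = A.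
Proof. by apply/matrixP => i j; rewrite !hadjE conjCK. Qed.

Lemma hadjZ m n (c : C) (A : 'M[C]_(m, n)) : hadj (c *: A) = c^* *: hadj A.
Proof. by apply/matrixP => i j; rewrite !(hadjE, mxE) rmorphM. Qed.

Lemma kronvE d (v w : 'cV[C]_d) i j :
  kronv v w (mxvec_index i j) 0 = v i 0 * w j 0.
Proof. by rewrite mxE tidxK. Qed.

Lemma mulmx1E m p (A : 'M[C]_(m, 1)) (B : 'M[C]_(1, p)) i j :
  (A *m B) i j = A i 0 * B 0 j.
Proof. by rewrite mxE big_ord1. Qed.

Lemma ptrans_sum d m (F : 'I_m -> 'M[C]_(d * d)) :
  ptrans (\sum_(k < m) F k) = \sum_(k < m) ptrans (F k).
Proof. by apply/matrixP => p q; rewrite !(mxE, summxE); apply: eq_bigr => k _; rewrite mxE. Qed.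

Lemma ptrans_rank1 d (v w : 'cV[C]_d) :
  ptrans (kronv v w *m hadj (kronv v w)) =
  kronv v (Defs.conjmx w) *m hadj (kronv v (Defs.conjmx w)).
Proof.
apply/matrixP => p q; case/mxvec_indexP: p => a b; case/mxvec_indexP: q => c e.
rewrite mxE !tidxK /= !mulmx1E !hadjE !kronvE /Defs.conjmx !mxE !rmorphM /= ?conjCK.

ring.
Qed.

Lemma mul_delta_col m n (A : 'M[C]_(m, n)) p q : (A *m (delta_mx q 0 : 'cV[C]_n)) p 0 = A p q.
Proof. by rewrite -colE mxE. Qed.

Lemma flip_mul d (x : 'cV[C]_(d * d)) a b :
  (flipmx C d *m x) (mxvec_index a b) 0 = x (mxvec_index b a) 0.
Proof.
rewrite mxE (bigD1 (mxvec_index b a)) //= mxE !tidxK /= !eqxx mul1r big1 ?addr0 //.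
move=> q; case/mxvec_indexP: q => c e neq; rewrite mxE !tidxK /=.
have [ae|ae] := eqVneq a e; have [bc|bc] := eqVneq b c.
- by rewrite ae bc eqxx in neq.
- by rewrite ?andbF mul0r.
- by rewrite mul0r.
- by rewrite mul0r.
Qed.

Lemma sym_terms d m (z : 'I_m -> 'cV[C]_(d * d)) :
  range_in_sym (\sum_(k < m) z k *m hadj (z k)) ->
  forall k p, (flipmx C d *m z k) p 0 = z k p 0.
Proof.
set rho := \sum_(k < m) _ => H.
have FR : flipmx C d *m rho = rho.
  apply/matrixP => p q; have := H (delta_mx q 0) => E.
  have := congr1 (fun M : 'cV[C]_(d * d) => M p 0) E.
  by rewrite /= mulmxA !mul_delta_col.
set G := 1%:M - flipmx C d.
have H0 : G *m rho *m hadj G = 0 by rewrite mulmxBl mul1mx FR subrr mul0mx.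
have H1 : \sum_(k < m) (G *m z k) *m hadj (G *m z k) = 0.
  rewrite -[RHS]H0 /rho mulmx_sumr mulmx_suml; apply: eq_bigr => k _.
  by rewrite hadjM !mulmxA.
move=> k p.
have := congr1 (fun M : 'M[C]_(d * d) => M p p) H1; rewrite /= summxE mxE => H2.
have H3 := psumr_eq0P _ H2.
have /H3 /(_ k isT) : forall i : 'I_m, true -> 0 <= (G *m z i *m hadj (G *m z i)) p p.
  by move=> i _; rewrite mulmx1E hadjE mul_conjC_ge0.
rewrite mulmx1E hadjE => /eqP; rewrite mul_conjC_eq0 mulmxBl mul1mx mxE.
by rewrite mxE subr_eq0 => /eqP.
Qed.

Lemma DNN_rank1 n (y : 'cV[C]_n) : (forall i, 0 <= y i 0) -> y != 0 ->
  DNN (y *m hadj y) /\ \rank (y *m hadj y) = 1%N.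
Proof.
move=> ge0 nz; split; first split; first split.
- by rewrite hadjM hadjK.
- move=> x.
  have -> : hadj x *m (y *m hadj y) *m x = (hadj x *m y) *m hadj (hadj x *m y).
    by rewrite hadjM hadjK !mulmxA.
  by rewrite mulmx1E hadjE mul_conjC_ge0.
- by move=> i j; rewrite mulmx1E hadjE geC0_conj // mulr_ge0.
apply/eqP; rewrite eqn_leq (leq_trans (mxrankM_maxl _ _) (rank_leq_col _)) /=.
rewrite lt0n mxrank_eq0; apply/eqP => H0; move/eqP: nz; apply.
apply/matrixP => i j; rewrite (ord1 j) mxE.
have := congr1 (fun M : 'M[C]_n => M i i) H0; rewrite /= mulmx1E hadjE mxE => /eqP.
by rewrite mul_conjC_eq0 => /eqP.
Qed.

Lemma R1DNN_sum n m (c : 'I_m -> C) (y : 'I_m -> 'cV[C]_n) :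
  (forall k, 0 <= c k) -> (forall k i, 0 <= y k i 0) ->
  R1DNN (\sum_(k < m) c k *: (y k *m hadj (y k))).
Proof.
case: n y => [|n] y cge0 yge0.
  exists 0%N, (fun _ => 0), (fun _ => 0); split; first by case.
  split; first by case.
  by apply/matrixP => [[]].
pose y0 : 'cV[C]_n.+1 := delta_mx ord0 0.
have y0ge0 : forall i, 0 <= y0 i 0 by move=> i; rewrite mxE ler0n.
have y0nz : y0 != 0.
  apply/eqP => /matrixP /(_ ord0 0); rewrite !mxE !eqxx /= => /eqP.
  by rewrite oner_eq0.
exists m, (fun k => if y k == 0 then 0 else c k),
  (fun k => let z := if y k == 0 then y0 else y k in z *m hadj z).
split; first by move=> k; case: eqP.
split.
  move=> k /=; case: eqP => [_|/eqP nz]; first exact: DNN_rank1.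
  exact: DNN_rank1.
apply: eq_bigr => k _ /=; case: eqP => [->|//].
by rewrite mul0mx !scale0r scaler0.
Qed.

Lemma cK (x : C) : Num.conj (Num.conj x) = x.
Proof. exact: conjCK. Qed.

Definition ip d (x y : 'cV[C]_d) := \sum_(a < d) (x a 0)^* * y a 0.

Lemma Kmap_mul n d (u : 'I_n -> 'cV[C]_d) (x : 'cV[C]_(d * d)) i :
  (Kmap u *m x) i 0 = (hadj (kronv (u i) (Defs.conjmx (u i))) *m x) 0 0.
Proof.
rewrite /Kmap mulmx_suml summxE (bigD1 i) //= -mulmxA mulmx1E mxE eqxx mul1r.
rewrite big1 ?addr0 // => j nj.
by rewrite -mulmxA mulmx1E mxE eq_sym (negbTE nj) mul0r.
Qed.

Lemma inner_kron d (u v w : 'cV[C]_d) :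
  (hadj (kronv u (Defs.conjmx u)) *m kronv v (Defs.conjmx w)) 0 0
  = ip u v * (ip w u).
Proof.
rewrite mxE sum_tidx /ip big_distrlr /=; apply: eq_bigr => a _.
apply: eq_bigr => b _; rewrite hadjE !kronvE /Defs.conjmx !mxE rmorphM /= cK.
ring.
Qed.

Lemma ip_conj d (x y : 'cV[C]_d) : (ip x y)^* = ip y x.
Proof.
rewrite /ip rmorph_sum; apply: eq_bigr => a _; by rewrite rmorphM /= cK mulrC.
Qed.

Lemma scal_term d (v w : 'cV[C]_d) :
  (forall a b, v a 0 * w b 0 = v b 0 * w a 0) ->
  exists l : C, forall x, ip x v * ip w x = l * (ip x v * ip v x).
Proof.
move=> sym; have [nv0|nvn0] := eqVneq (ip v v) 0.
  have v0 : forall a, v a 0 = 0.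
    move=> a.
    have nn : forall b : 'I_d, true -> 0 <= (v b 0)^* * v b 0.
      by move=> b _; rewrite mulrC mul_conjC_ge0.
    have := psumr_eq0P nn nv0 (i:=a) isT.
    by rewrite mulrC => /eqP; rewrite mul_conjC_eq0 => /eqP.
  exists 0 => x; rewrite /ip big1 ?mul0r // => a _.
  by rewrite v0 mulr0.
exists (ip v w / ip v v)^* => x.
set mu := ip v w / ip v v.
have wE : forall b, w b 0 = mu * v b 0.
  move=> b; rewrite /mu; apply: (mulfI nvn0); rewrite mulrA mulrCA mulfV // mulr1.
  rewrite /ip mulrC big_distrr /= big_distrl /=; apply: eq_bigr => a _.
  have e := sym a b.
  transitivity ((v a 0)^* * (v a 0 * w b 0)); first ring.
  by rewrite e; ring.
have ipw : ip x w = mu * ip x v.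
  rewrite /ip big_distrr /=; apply: eq_bigr => a _; rewrite wE; ring.
by rewrite -(ip_conj x w) ipw rmorphM /= ip_conj; ring.
Qed.

End Helpers.

Theorem mainTheorem12 (C : numClosedFieldType) (n d : nat)
  (u : 'I_n -> 'cV[C]_d) (rho : 'M[C]_(d * d)) :
  (n <= d)%N ->
  orthonormal_fam u ->
  psdmx rho ->
  separable rho ->
  range_in_sym rho ->
  R1DNN (Kmap u *m ptrans rho *m hadj (Kmap u)).
Proof.
move=> _ _ _ [m [v [w rhoE]]] Hsym; rewrite rhoE in Hsym *.
have symk := sym_terms Hsym.
have : forall k : 'I_m, exists l : C,
    forall x, ip x (v k) * ip (w k) x = l * (ip x (v k) * ip (v k) x).
  move=> k; apply: scal_term => a b.
  have := symk k (mxvec_index a b); rewrite flip_mul !kronvE => e.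
  by rewrite e.
case/fin_all_exists => l hl.
pose y k : 'cV[C]_n := \col_i (ip (u i) (v k) * ip (v k) (u i)).
have -> : Kmap u *m ptrans (\sum_(k < m) kronv (v k) (w k) *m hadj (kronv (v k) (w k)))
    *m hadj (Kmap u) = \sum_(k < m) (l k * (l k)^*) *: (y k *m hadj (y k)).
  rewrite ptrans_sum mulmx_sumr mulmx_suml; apply: eq_bigr => k _.
  rewrite ptrans_rank1 !mulmxA -mulmxA -hadjM.
  have -> : Kmap u *m kronv (v k) (Defs.conjmx (w k)) = l k *: y k.
    apply/matrixP => i j; rewrite (ord1 j) Kmap_mul inner_kron !mxE.
    exact: hl.
  by rewrite hadjZ -scalemxAr scalemxAl scalerA scalemxAl mulrC.
apply: (R1DNN_sum (c := fun k => l k * (l k)^*) (y := y)) => [k|k i]; first exact: mul_conjC_ge0.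
by rewrite mxE -(ip_conj (u i)) mul_conjC_ge0.
Qed.
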